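(* Let $R$ be a t-unital ring and $F$ a t-unital (left or right) $R$-module. Then $F$ is t-flat if and only if it is a flat unital $\widetilde R$-module, where $\widetilde R=\mathbb Z\oplus R$ is the unitalization of $R$.
   Context: Rings are associative, not necessarily unital; modules are not assumed unital, and nonunital $R$-modules are the same as unital modules over $\widetilde R=\mathbb Z\oplus R$ (the ring with a formally adjoined unit, $R$ a two-sided ideal). $R$ is t-unital if $R\otimes_R R\to R$ is an isomorphism; a left module $M$ is t-unital if $R\otimes_R M\to M$ is an isomorphism, a right module $N$ if $N\otimes_R R\to N$ is an isomorphism. For t-unital $R$, the categories of t-unital left modules and of t-unital right modules are abelian. A left $R$-module $F$ is t-flat if ${-}\otimes_R F$, from t-unital right $R$-modules to abelian groups, takes kernels computed in the category of t-unital right $R$-modules to kernels of abelian groups; a right $R$-module $F$ is t-flat if $F\otimes_R{-}$, from t-unital left $R$-modules to abelian groups, takes kernels computed in the category of t-unital left $R$-modules to kernels of abelian groups. *)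

(* Defs.v *)
From HB Require Import structures.
From mathcomp Require Import all_boot all_order all_algebra.
Set Implicit Arguments. Unset Strict Implicit. Unset Printing Implicit Defensive.
Import GRing.Theory.
Local Open Scope ring_scope.

Definition nuring_axioms (R : zmodType) (mul : R -> R -> R) : Prop :=
  associative mul /\ left_distributive mul +%R /\ right_distributive mul +%R.

Definition lmod_axioms (R : zmodType) (mul : R -> R -> R)
    (M : zmodType) (am : R -> M -> M) : Prop :=
  [/\ forall r s m, am (mul r s) m = am r (am s m),
      forall r m1 m2, am r (m1 + m2) = am r m1 + am r m2 &
      forall r1 r2 m, am (r1 + r2) m = am r1 m + am r2 m].

Definition rmod_axioms (R : zmodType) (mul : R -> R -> R)
    (N : zmodType) (an : N -> R -> N) : Prop :=
  [/\ forall n r s, an n (mul r s) = an (an n r) s,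
      forall n1 n2 r, an (n1 + n2) r = an n1 r + an n2 r &
      forall n r1 r2, an n (r1 + r2) = an n r1 + an n r2].

Definition lmod_morph (R : Type) (M1 M2 : zmodType)
    (a1 : R -> M1 -> M1) (a2 : R -> M2 -> M2) (f : M1 -> M2) : Prop :=
  (forall x y, f (x + y) = f x + f y) /\ (forall r x, f (a1 r x) = a2 r (f x)).

Definition rmod_morph (R : Type) (N1 N2 : zmodType)
    (a1 : N1 -> R -> N1) (a2 : N2 -> R -> N2) (f : N1 -> N2) : Prop :=
  (forall x y, f (x + y) = f x + f y) /\ (forall x r, f (a1 x r) = a2 (f x) r).

(* Tensor product N (x)_R M of a right module N and a left module M.
   Elements are represented by formal sums  sum_i n_i (x) m_i  (lists of pairs);
   [tens_eq an am s t] says that s and t represent the same element of N (x)_R M.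
   It is the congruence (for concatenation) generated by commutativity and the
   defining relations of the tensor product, i.e. the commutative-monoid
   presentation of N (x)_R M (which is a group, since (n (x) m)+(-n (x) m) = 0). *)
Section Tensor.
Variables (R : Type) (N M : zmodType) (an : N -> R -> N) (am : R -> M -> M).

Inductive tens_eq : seq (N * M) -> seq (N * M) -> Prop :=
| te_refl s : tens_eq s s
| te_sym s t : tens_eq s t -> tens_eq t s
| te_trans s t u : tens_eq s t -> tens_eq t u -> tens_eq s u
| te_cat s1 s2 t1 t2 :
    tens_eq s1 t1 -> tens_eq s2 t2 -> tens_eq (s1 ++ s2) (t1 ++ t2)
| te_comm s t : tens_eq (s ++ t) (t ++ s)
| te_zero m : tens_eq [:: (0, m)] [::]
| te_addl n1 n2 m : tens_eq [:: (n1 + n2, m)] [:: (n1, m); (n2, m)]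
| te_addr n m1 m2 : tens_eq [:: (n, m1 + m2)] [:: (n, m1); (n, m2)]
| te_bal n r m : tens_eq [:: (an n r, m)] [:: (n, am r m)].

End Tensor.

Definition tmapl (N1 N2 M : Type) (f : N1 -> N2) (s : seq (N1 * M)) :
  seq (N2 * M) := map (fun p => (f p.1, p.2)) s.
Definition tmapr (N M1 M2 : Type) (g : M1 -> M2) (s : seq (N * M1)) :
  seq (N * M2) := map (fun p => (p.1, g p.2)) s.

(* t-unitality: the multiplication map R (x)_R M -> M (resp. N (x)_R R -> N)
   is an isomorphism of abelian groups (surjective and with zero kernel). *)
Definition tunital_lmod (R : zmodType) (mul : R -> R -> R)
    (M : zmodType) (am : R -> M -> M) : Prop :=
  (forall m : M, exists s : seq (R * M), m = \sum_(p <- s) am p.1 p.2) /\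
  (forall s : seq (R * M), \sum_(p <- s) am p.1 p.2 = 0 -> tens_eq mul am s [::]).

Definition tunital_rmod (R : zmodType) (mul : R -> R -> R)
    (N : zmodType) (an : N -> R -> N) : Prop :=
  (forall n : N, exists s : seq (N * R), n = \sum_(p <- s) an p.1 p.2) /\
  (forall s : seq (N * R), \sum_(p <- s) an p.1 p.2 = 0 -> tens_eq an mul s [::]).

Definition tunital_ring (R : zmodType) (mul : R -> R -> R) : Prop :=
  tunital_lmod mul mul.

Definition is_tkernel_r (R : zmodType) (mul : R -> R -> R)
    (K N1 N2 : zmodType) (aK : K -> R -> K) (a1 : N1 -> R -> N1)
    (k : K -> N1) (f : N1 -> N2) : Prop :=
  (forall x, f (k x) = 0) /\
  forall (L : zmodType) (aL : L -> R -> L) (g : L -> N1),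
    rmod_axioms mul aL -> tunital_rmod mul aL -> rmod_morph aL a1 g ->
    (forall x, f (g x) = 0) ->
    exists h : L -> K, [/\ rmod_morph aL aK h, (forall x, k (h x) = g x) &
      forall h' : L -> K, rmod_morph aL aK h' -> (forall x, k (h' x) = g x) ->
        forall x, h' x = h x].

Definition is_tkernel_l (R : zmodType) (mul : R -> R -> R)
    (K M1 M2 : zmodType) (aK : R -> K -> K) (a1 : R -> M1 -> M1)
    (k : K -> M1) (f : M1 -> M2) : Prop :=
  (forall x, f (k x) = 0) /\
  forall (L : zmodType) (aL : R -> L -> L) (g : L -> M1),
    lmod_axioms mul aL -> tunital_lmod mul aL -> lmod_morph aL a1 g ->
    (forall x, f (g x) = 0) ->
    exists h : L -> K, [/\ lmod_morph aL aK h, (forall x, k (h x) = g x) &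
      forall h' : L -> K, lmod_morph aL aK h' -> (forall x, k (h' x) = g x) ->
        forall x, h' x = h x].

(* t-flat left module F: - (x)_R F takes kernels in the category of t-unital
   right modules to kernels of abelian groups. *)
Definition tflat_l (R : zmodType) (mul : R -> R -> R)
    (F : zmodType) (aF : R -> F -> F) : Prop :=
  forall (K N1 N2 : zmodType) (aK : K -> R -> K) (a1 : N1 -> R -> N1)
         (a2 : N2 -> R -> N2) (k : K -> N1) (f : N1 -> N2),
    rmod_axioms mul aK -> rmod_axioms mul a1 -> rmod_axioms mul a2 ->
    tunital_rmod mul aK -> tunital_rmod mul a1 -> tunital_rmod mul a2 ->
    rmod_morph aK a1 k -> rmod_morph a1 a2 f ->
    is_tkernel_r mul aK a1 k f ->
    [/\ forall t, tens_eq a2 aF (tmapl f (tmapl k t)) [::],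
        forall t, tens_eq a1 aF (tmapl k t) [::] -> tens_eq aK aF t [::] &
        forall s, tens_eq a2 aF (tmapl f s) [::] ->
          exists t, tens_eq a1 aF (tmapl k t) s].

Definition tflat_r (R : zmodType) (mul : R -> R -> R)
    (F : zmodType) (aF : F -> R -> F) : Prop :=
  forall (K M1 M2 : zmodType) (aK : R -> K -> K) (a1 : R -> M1 -> M1)
         (a2 : R -> M2 -> M2) (k : K -> M1) (f : M1 -> M2),
    lmod_axioms mul aK -> lmod_axioms mul a1 -> lmod_axioms mul a2 ->
    tunital_lmod mul aK -> tunital_lmod mul a1 -> tunital_lmod mul a2 ->
    lmod_morph aK a1 k -> lmod_morph a1 a2 f ->
    is_tkernel_l mul aK a1 k f ->
    [/\ forall t, tens_eq aF a2 (tmapr f (tmapr k t)) [::],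
        forall t, tens_eq aF a1 (tmapr k t) [::] -> tens_eq aF aK t [::] &
        forall s, tens_eq aF a2 (tmapr f s) [::] ->
          exists t, tens_eq aF a1 (tmapr k t) s].

(* Flatness over a unital ring (S, smul, one): tensoring with F is exact, i.e.
   takes kernels (in the category of unital modules: injective maps onto the
   kernel) to kernels of abelian groups. *)
Definition flat_l (S : zmodType) (smul : S -> S -> S) (one : S)
    (F : zmodType) (aF : S -> F -> F) : Prop :=
  forall (K N1 N2 : zmodType) (aK : K -> S -> K) (a1 : N1 -> S -> N1)
         (a2 : N2 -> S -> N2) (k : K -> N1) (f : N1 -> N2),
    rmod_axioms smul aK -> rmod_axioms smul a1 -> rmod_axioms smul a2 ->
    (forall x, aK x one = x) -> (forall x, a1 x one = x) -> (forall x, a2 x one = x) ->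
    rmod_morph aK a1 k -> rmod_morph a1 a2 f ->
    injective k -> (forall y, f y = 0 <-> exists x, y = k x) ->
    [/\ forall t, tens_eq a2 aF (tmapl f (tmapl k t)) [::],
        forall t, tens_eq a1 aF (tmapl k t) [::] -> tens_eq aK aF t [::] &
        forall s, tens_eq a2 aF (tmapl f s) [::] ->
          exists t, tens_eq a1 aF (tmapl k t) s].

Definition flat_r (S : zmodType) (smul : S -> S -> S) (one : S)
    (F : zmodType) (aF : F -> S -> F) : Prop :=
  forall (K M1 M2 : zmodType) (aK : S -> K -> K) (a1 : S -> M1 -> M1)
         (a2 : S -> M2 -> M2) (k : K -> M1) (f : M1 -> M2),
    lmod_axioms smul aK -> lmod_axioms smul a1 -> lmod_axioms smul a2 ->
    (forall x, aK one x = x) -> (forall x, a1 one x = x) -> (forall x, a2 one x = x) ->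
    lmod_morph aK a1 k -> lmod_morph a1 a2 f ->
    injective k -> (forall y, f y = 0 <-> exists x, y = k x) ->
    [/\ forall t, tens_eq aF a2 (tmapr f (tmapr k t)) [::],
        forall t, tens_eq aF a1 (tmapr k t) [::] -> tens_eq aF aK t [::] &
        forall s, tens_eq aF a2 (tmapr f s) [::] ->
          exists t, tens_eq aF a1 (tmapr k t) s].

Definition unitz (R : zmodType) : zmodType := (int * R)%type.

Definition rt_mul (R : zmodType) (mul : R -> R -> R) (x y : unitz R) : unitz R :=
  (x.1 * y.1, y.2 *~ x.1 + x.2 *~ y.1 + mul x.2 y.2).

Definition rt_one (R : zmodType) : unitz R := (1, 0).

Definition rt_lact (R : zmodType) (M : zmodType) (am : R -> M -> M)
    (x : unitz R) (m : M) : M := m *~ x.1 + am x.2 m.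
Definition rt_ract (R : zmodType) (N : zmodType) (an : N -> R -> N)
    (n : N) (x : unitz R) : N := n *~ x.1 + an n x.2.

(* Main.v *)
From HB Require Import structures.
Require Import Defs.
From mathcomp Require Import all_boot all_order all_algebra.
From mathcomp Require Import boolp.
Set Implicit Arguments. Unset Strict Implicit. Unset Printing Implicit Defensive.
Import GRing.Theory.
Local Open Scope ring_scope.

Section TensQ.
Variables (R : Type) (N M : zmodType) (an : N -> R -> N) (am : R -> M -> M).

Local Notation te := (tens_eq an am).

Lemma tcanon_ex (s : seq (N * M)) : exists t, `[< te s t >].
Proof. by exists s; apply: asboolT; apply: te_refl. Qed.

Definition tcanon (s : seq (N * M)) : seq (N * M) := xchoose (tcanon_ex s).

Lemma tcanonP s : te s (tcanon s).
Proof. exact: (asboolW (xchooseP (tcanon_ex s))). Qed.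

Lemma tcanon_eq s t : te s t -> tcanon s = tcanon t.
Proof.
move=> st; apply: eq_xchoose => u; apply: asbool_equiv_eq; split => H.
  exact: te_trans (te_sym st) H.
exact: te_trans st H.
Qed.

Lemma tcanonK s : tcanon (tcanon s) = tcanon s.
Proof. by apply: tcanon_eq; apply: te_sym; apply: tcanonP. Qed.

Definition Tens := {s : seq (N * M) | tcanon s == s}.
HB.instance Definition _ := Choice.on Tens.

Definition tcls (s : seq (N * M)) : Tens := exist _ (tcanon s) (introT eqP (tcanonK s)).

Lemma tclsP s : te (val (tcls s)) s.
Proof. exact: te_sym (tcanonP s). Qed.

Lemma tcls_eq s t : te s t -> tcls s = tcls t.
Proof. by move=> st; apply: val_inj => /=; apply: tcanon_eq. Qed.

Lemma tcls_inj s t : tcls s = tcls t -> te s t.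
Proof.
move=> /(congr1 val) /= e.
apply: te_trans (tcanonP s) _; rewrite e; exact: te_sym (tcanonP t).
Qed.

Lemma tcls_val (q : Tens) : tcls (val q) = q.
Proof. by apply: val_inj => /=; apply/eqP; apply: (valP q). Qed.

Definition tneg (s : seq (N * M)) := map (fun p => (- p.1, p.2)) s.

Lemma te_catl s1 s2 t : te s1 s2 -> te (s1 ++ t) (s2 ++ t).
Proof. by move=> h; apply: te_cat => //; apply: te_refl. Qed.
Lemma te_catr s t1 t2 : te t1 t2 -> te (s ++ t1) (s ++ t2).
Proof. by move=> h; apply: te_cat => //; apply: te_refl. Qed.

Lemma te_pair0 n m : te [:: (- n, m); (n, m)] [::].
Proof.
apply: te_trans (te_sym (te_addl _ _ _ _ _)) _.
by rewrite addNr; apply: te_zero.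
Qed.

Lemma te_negK s : te (tneg s ++ s) [::].
Proof.
elim: s => [|p s IH] /=; first exact: te_refl.
have -> : (- p.1, p.2) :: tneg s ++ p :: s =
   [:: (- p.1, p.2)] ++ ((tneg s ++ [:: p]) ++ s) by rewrite -catA.
apply: te_trans (te_catr _ (te_catl _ (te_comm _ _ _ _))) _.
rewrite /= -[(- p.1, p.2) :: p :: _]/([:: (- p.1, p.2); p] ++ (tneg s ++ s)).
have -> : [::] = [::] ++ ([::] : seq (N * M)) by [].
apply: te_cat => //; case: p => n m; exact: te_pair0.
Qed.

Definition tadd (a b : Tens) := tcls (val a ++ val b).
Definition topp (a : Tens) := tcls (tneg (val a)).
Definition tzero := tcls [::].

Lemma taddA : associative tadd.
Proof.
move=> a b c; apply: tcls_eq.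
apply: te_trans (te_catr _ (tclsP _)) _.
apply: te_trans _ (te_catl _ (te_sym (tclsP _))).
by rewrite catA; apply: te_refl.
Qed.

Lemma taddC : commutative tadd.
Proof. by move=> a b; apply: tcls_eq; apply: te_comm. Qed.

Lemma tadd0 : left_id tzero tadd.
Proof.
move=> a; rewrite /tadd -{2}(tcls_val a); apply: tcls_eq.
apply: te_trans (te_catl _ (tclsP _)) _; exact: te_refl.
Qed.

Lemma taddN : left_inverse tzero topp tadd.
Proof.
move=> a; apply: tcls_eq.
apply: te_trans (te_catl _ (tclsP _)) _; exact: te_negK.
Qed.

HB.instance Definition _ := GRing.isZmodule.Build Tens taddA taddC tadd0 taddN.

Lemma tcls_cat s t : tcls (s ++ t) = tcls s + tcls t.
Proof.
apply: tcls_eq; apply: te_sym; apply: te_cat; exact: tclsP.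
Qed.

Lemma tcls_nil : tcls [::] = 0.
Proof. by []. Qed.

Lemma tcls_eq0 s : tcls s = 0 -> te s [::].
Proof. by move=> h; apply: tcls_inj; rewrite h. Qed.

Lemma tcls_eq0' s : te s [::] -> tcls s = 0.
Proof. by move=> h; rewrite (tcls_eq h). Qed.

Definition pt (n : N) (m : M) : Tens := tcls [:: (n, m)].

Lemma tcls_sum s : tcls s = \sum_(p <- s) pt p.1 p.2.
Proof.
elim: s => [|p s IH]; first by rewrite big_nil tcls_nil.
by case: p => n m; rewrite big_cons -IH -tcls_cat.
Qed.

Lemma ptDl n1 n2 m : pt (n1 + n2) m = pt n1 m + pt n2 m.
Proof. by rewrite -tcls_cat; apply: tcls_eq; apply: te_addl. Qed.
Lemma ptDr n m1 m2 : pt n (m1 + m2) = pt n m1 + pt n m2.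
Proof. by rewrite -tcls_cat; apply: tcls_eq; apply: te_addr. Qed.
Lemma pt_bal n r m : pt (an n r) m = pt n (am r m).
Proof. by apply: tcls_eq; apply: te_bal. Qed.
Lemma pt0l m : pt 0 m = 0.
Proof. by apply: tcls_eq; apply: te_zero. Qed.
Lemma pt0r n : pt n 0 = 0.
Proof. by apply: (@addrI _ (pt n 0)); rewrite -ptDr !addr0. Qed.

Lemma tval_sum (q : Tens) : q = \sum_(p <- val q) pt p.1 p.2.
Proof. by rewrite -tcls_sum tcls_val. Qed.

Section Lift.
Variables (V : zmodType) (phi : N -> M -> V).
Hypotheses (phiDl : forall n1 n2 m, phi (n1 + n2) m = phi n1 m + phi n2 m)
           (phiDr : forall n m1 m2, phi n (m1 + m2) = phi n m1 + phi n m2)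
           (phiB : forall n r m, phi (an n r) m = phi n (am r m)).

Definition tsum (s : seq (N * M)) := \sum_(p <- s) phi p.1 p.2.

Lemma phi0l m : phi 0 m = 0.
Proof. by apply: (@addrI _ (phi 0 m)); rewrite -phiDl !addr0. Qed.

Lemma tsum_eq s t : te s t -> tsum s = tsum t.
Proof.
rewrite /tsum; elim => {s t} //.
- by move=> s t u _ -> _ ->.
- by move=> s1 s2 t1 t2 _ e1 _ e2; rewrite !big_cat e1 e2.
- by move=> s t; rewrite !big_cat [X in X = _]addrC.
- by move=> m; rewrite big_seq1 big_nil phi0l.
- by move=> n1 n2 m; rewrite big_seq1 !big_cons big_nil addr0 phiDl.
- by move=> n m1 m2; rewrite big_seq1 !big_cons big_nil addr0 phiDr.
- by move=> n r m; rewrite !big_seq1 phiB.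
Qed.

Definition tlift (q : Tens) : V := tsum (val q).

Lemma tlift_cls s : tlift (tcls s) = tsum s.
Proof. exact: tsum_eq (tclsP s). Qed.

Lemma tlift_pt n m : tlift (pt n m) = phi n m.
Proof. by rewrite tlift_cls /tsum big_seq1. Qed.

Lemma tliftD x y : tlift (x + y) = tlift x + tlift y.
Proof.
by rewrite -(tcls_val x) -(tcls_val y) -tcls_cat !tlift_cls /tsum big_cat.
Qed.
End Lift.

End TensQ.

Definition isadd (U V : zmodType) (f : U -> V) := forall x y, f (x + y) = f x + f y.

Lemma isadd0 (U V : zmodType) (f : U -> V) : isadd f -> f 0 = 0.
Proof. by move=> h; apply: (@addrI _ (f 0)); rewrite -h !addr0. Qed.

Lemma addfN (U V : zmodType) (f : U -> V) : isadd f -> forall x, f (- x) = - f x.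
Proof.
move=> h x; apply: (@addrI _ (f x)); rewrite -h !subrr; exact: isadd0.
Qed.

Lemma addf_sum (U V : zmodType) (f : U -> V) (I : Type) (s : seq I) (F : I -> U) :
  isadd f -> f (\sum_(i <- s) F i) = \sum_(i <- s) f (F i).
Proof.
move=> h; elim: s => [|i s IH]; first by rewrite !big_nil isadd0.
by rewrite !big_cons h IH.
Qed.

Lemma addf_comp (U V W : zmodType) (f : U -> V) (g : V -> W) :
  isadd f -> isadd g -> isadd (fun x => g (f x)).
Proof. by move=> hf hg x y; rewrite hf hg. Qed.

Lemma addf_int (V : zmodType) (g : int -> V) : isadd g -> forall z, g z = g 1 *~ z.
Proof.
move=> h; have g0 := isadd0 h.
have hn : forall k : nat, g k = g 1 *+ k.
  elim=> [|k IH]; first by rewrite g0 mulr0n.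
  by rewrite -addn1 PoszD h IH mulrnDr mulr1n.
case=> k; first by rewrite hn.
by rewrite NegzE addfN // hn mulrNz.
Qed.

Lemma addf_mulz (U V : zmodType) (f : U -> V) : isadd f -> forall x z, f (x *~ z) = f x *~ z.
Proof.
move=> h x z; have := @addf_int _ (fun z => f (x *~ z)).
rewrite mulr1z => -> //.
by move=> a b; rewrite mulrzDr h.
Qed.

Section TensExt.
Variables (R : Type) (N M : zmodType) (an : N -> R -> N) (am : R -> M -> M).
Lemma tens_ext (V : zmodType) (f g : Tens an am -> V) :
  isadd f -> isadd g -> (forall n m, f (pt an am n m) = g (pt an am n m)) -> f =1 g.
Proof.
move=> hf hg e q; rewrite (tval_sum q) !addf_sum //.
by apply: eq_bigr => p _; apply: e.
Qed.

End TensExt.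

Section Mod.
Variables (R : zmodType) (mul : R -> R -> R).
Hypothesis HR : nuring_axioms mul.

Lemma rmulA : associative mul. Proof. by case: HR. Qed.
Lemma rmulDl : left_distributive mul +%R. Proof. by case: HR => _ []. Qed.
Lemma rmulDr : right_distributive mul +%R. Proof. by case: HR => _ []. Qed.

Definition TN (N : zmodType) (an : N -> R -> N) := Tens an mul.

Definition tact (N : zmodType) (an : N -> R -> N) (q : TN an) (r : R) : TN an :=
  tlift (fun n s => pt an mul n (mul s r)) q.
Definition teps (N : zmodType) (an : N -> R -> N) (q : TN an) : N :=
  tlift (fun n s => an n s) q.
Definition Tmap (N1 N2 M : zmodType) (a1 : N1 -> R -> N1) (a2 : N2 -> R -> N2)
  (am : R -> M -> M) (g : N1 -> N2) (q : Tens a1 am) : Tens a2 am :=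
  tlift (fun n m => pt a2 am (g n) m) q.

Section OneMod.
Variables (N : zmodType) (an : N -> R -> N).
Hypothesis HN : rmod_axioms mul an.
Implicit Types (q : TN an).

Lemma anA n r s : an n (mul r s) = an (an n r) s. Proof. by case: HN. Qed.
Lemma anDl : forall n1 n2 r, an (n1 + n2) r = an n1 r + an n2 r. Proof. by case: HN. Qed.
Lemma anDr : forall n r1 r2, an n (r1 + r2) = an n r1 + an n r2. Proof. by case: HN. Qed.

Let phiT r := fun n s => pt an mul n (mul s r).
Lemma phiT1 r n1 n2 m : phiT r (n1 + n2) m = phiT r n1 m + phiT r n2 m.
Proof. exact: ptDl. Qed.
Lemma phiT2 r n m1 m2 : phiT r n (m1 + m2) = phiT r n m1 + phiT r n m2.
Proof. by rewrite /phiT rmulDl ptDr. Qed.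
Lemma phiT3 r n s m : phiT r (an n s) m = phiT r n (mul s m).
Proof. by rewrite /phiT pt_bal rmulA. Qed.

Lemma tact_pt n s r : tact (pt an mul n s) r = pt an mul n (mul s r).
Proof. exact: (tlift_pt (phiT1 r) (phiT2 r) (phiT3 r)). Qed.
Lemma tactDl r : isadd (fun q : TN an => tact q r).
Proof. move=> x y; exact: (tliftD (phiT1 r) (phiT2 r) (phiT3 r)). Qed.

Lemma pt_addf (n : N) : isadd (pt an mul n : R -> _). Proof. move=> x y; exact: ptDr. Qed.
Lemma pt_addfl (m : R) : isadd (fun n : N => pt an mul n m). Proof. move=> x y; exact: ptDl. Qed.

Lemma tactDr (q : TN an) : isadd (tact q).
Proof.
move=> r1 r2; move: q; apply: tens_ext.
- exact: tactDl.
- by move=> x y; rewrite !tactDl addrACA.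
- by move=> n m; rewrite !tact_pt rmulDr ptDr.
Qed.

Lemma tact_rmod : rmod_axioms mul (@tact N an).
Proof.
split.
- move=> q r s; move: q; apply: tens_ext.
  + exact: tactDl.
  + apply: (addf_comp (tactDl r)); exact: tactDl.
  + by move=> n m; rewrite !tact_pt rmulA.
- by move=> x y r; apply: tactDl.
- by move=> q r1 r2; apply: tactDr.
Qed.

Lemma teps1 n1 n2 m : an (n1 + n2) m = an n1 m + an n2 m. Proof. exact: anDl. Qed.
Lemma teps2 n m1 m2 : an n (m1 + m2) = an n m1 + an n m2. Proof. exact: anDr. Qed.
Lemma teps3 n s m : an (an n s) m = an n (mul s m). Proof. by rewrite anA. Qed.

Lemma teps_pt n s : teps (pt an mul n s) = an n s.
Proof. exact: (tlift_pt teps1 teps2 teps3). Qed.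
Lemma tepsD : isadd (@teps N an).
Proof. move=> x y; exact: (tliftD teps1 teps2 teps3). Qed.
Lemma teps_cls s : teps (tcls an mul s) = \sum_(p <- s) an p.1 p.2.
Proof. exact: (tlift_cls teps1 teps2 teps3). Qed.

Lemma teps_act q r : teps (tact q r) = an (teps q) r.
Proof.
move: q; apply: tens_ext.
- exact: (addf_comp (tactDl r) tepsD).
- by move=> x y; rewrite tepsD anDl.
- by move=> n m; rewrite tact_pt !teps_pt anA.
Qed.

Lemma pt_eps q r : pt an mul (teps q) r = tact q r.
Proof.
move: q; apply: tens_ext.
- exact: (addf_comp tepsD (pt_addfl r)).
- exact: tactDl.
- by move=> n m; rewrite tact_pt teps_pt pt_bal.
Qed.

Lemma teps_morph : rmod_morph (@tact N an) an (@teps N an).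
Proof. by split; [apply: tepsD | apply: teps_act]. Qed.
End OneMod.


Section Map.
Variables (N1 N2 M : zmodType) (a1 : N1 -> R -> N1) (a2 : N2 -> R -> N2).
Variables (am : R -> M -> M) (g : N1 -> N2).
Hypothesis Hg : rmod_morph a1 a2 g.
Implicit Types (q : Tens a1 am).

Lemma gD : isadd g. Proof. by case: Hg. Qed.
Lemma gA x r : g (a1 x r) = a2 (g x) r. Proof. by case: Hg. Qed.

Let phiM := fun n m => pt a2 am (g n) m.
Lemma phiM1 n1 n2 m : phiM (n1 + n2) m = phiM n1 m + phiM n2 m.
Proof. by rewrite /phiM gD ptDl. Qed.
Lemma phiM2 n m1 m2 : phiM n (m1 + m2) = phiM n m1 + phiM n m2.
Proof. exact: ptDr. Qed.
Lemma phiM3 n s m : phiM (a1 n s) m = phiM n (am s m).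
Proof. by rewrite /phiM gA pt_bal. Qed.

Lemma Tmap_pt n m : Tmap a2 g (pt a1 am n m) = pt a2 am (g n) m.
Proof. exact: (tlift_pt phiM1 phiM2 phiM3). Qed.
Lemma TmapD : isadd (Tmap a2 g : Tens a1 am -> _).
Proof. move=> x y; exact: (tliftD phiM1 phiM2 phiM3). Qed.
Lemma Tmap_cls s : Tmap a2 g (tcls a1 am s) = tcls a2 am (tmapl g s).
Proof.
transitivity (tsum phiM s); first exact: (tlift_cls phiM1 phiM2 phiM3).
rewrite /tsum tcls_sum big_map; by apply: eq_bigr.
Qed.
End Map.

Section Map2.
Variables (N1 N2 : zmodType) (a1 : N1 -> R -> N1) (a2 : N2 -> R -> N2).
Variables (g : N1 -> N2).
Hypotheses (H1 : rmod_axioms mul a1) (H2 : rmod_axioms mul a2).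
Hypothesis Hg : rmod_morph a1 a2 g.
Implicit Types (q : TN a1).

Lemma Tmap_act q r : Tmap a2 g (tact q r) = tact (Tmap a2 g q) r.
Proof.
move: q; apply: tens_ext.
- exact: (addf_comp (tactDl r) (TmapD Hg)).
- exact: (addf_comp (TmapD Hg) (tactDl r)).
- by move=> n m; rewrite tact_pt !Tmap_pt // tact_pt.
Qed.

Lemma teps_Tmap q : teps (Tmap a2 g q) = g (teps q).
Proof.
move: q; apply: tens_ext.
- exact: (addf_comp (TmapD Hg) (tepsD H2)).
- exact: (addf_comp (tepsD H1) (gD Hg)).
- by move=> n m; rewrite Tmap_pt // !teps_pt // (gA Hg).
Qed.

Lemma Tmap_morph : rmod_morph (@tact N1 a1) (@tact N2 a2) (Tmap a2 g).
Proof. split; [exact: (TmapD Hg) | exact: Tmap_act]. Qed.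
End Map2.

Lemma Tmap_comp (N1 N2 N3 M : zmodType) (a1 : N1 -> R -> N1) (a2 : N2 -> R -> N2)
  (a3 : N3 -> R -> N3) (am : R -> M -> M) (g1 : N1 -> N2) (g2 : N2 -> N3) (g3 : N1 -> N3) :
  rmod_morph a1 a2 g1 -> rmod_morph a2 a3 g2 -> rmod_morph a1 a3 g3 ->
  (forall x, g2 (g1 x) = g3 x) ->
  forall q : Tens a1 am, Tmap a3 g2 (Tmap a2 g1 q) = Tmap a3 g3 q.
Proof.
move=> h1 h2 h3 e; apply: tens_ext.
- exact: (addf_comp (TmapD h1) (TmapD h2)).
- exact: (TmapD h3).
- by move=> n m; rewrite !Tmap_pt // e.
Qed.

End Mod.

Section Assoc.
Variables (R : zmodType) (mul : R -> R -> R).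
Hypothesis HR : nuring_axioms mul.
Variables (N : zmodType) (an : N -> R -> N) (M : zmodType) (am : R -> M -> M).
Hypotheses (HN : rmod_axioms mul an) (HM : lmod_axioms mul am) (HMt : tunital_lmod mul am).

Lemma amA r s m : am (mul r s) m = am r (am s m). Proof. by case: HM. Qed.
Lemma amDr r : isadd (am r). Proof. by move=> x y; case: HM. Qed.
Lemma amDl m : isadd (am^~ m). Proof. by move=> x y; case: HM. Qed.

Local Notation TNN := (TN mul an).
Local Notation TT := (Tens (@tact R mul N an) am).
Local Notation NM := (Tens an am).

Definition nu (x : M) (q : TNN) : NM := tlift (fun n r => pt an am n (am r x)) q.

Section nuS.
Variable x : M.
Let phi := fun n r => pt an am n (am r x).
Lemma phin1 n1 n2 m : phi (n1 + n2) m = phi n1 m + phi n2 m. Proof. exact: ptDl. Qed.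
Lemma phin2 n m1 m2 : phi n (m1 + m2) = phi n m1 + phi n m2.
Proof. by rewrite /phi amDl ptDr. Qed.
Lemma phin3 n s m : phi (an n s) m = phi n (mul s m).
Proof. by rewrite /phi pt_bal amA. Qed.
Lemma nu_pt n r : nu x (pt an mul n r) = pt an am n (am r x).
Proof. exact: (tlift_pt phin1 phin2 phin3). Qed.
Lemma nuD : isadd (nu x).
Proof. move=> a b; exact: (tliftD phin1 phin2 phin3). Qed.
End nuS.

Lemma nuDx q : isadd (nu^~ q).
Proof.
move=> x y; move: q; apply: tens_ext.
- exact: nuD.
- by move=> a b; rewrite !nuD addrACA.
- by move=> n r; rewrite !nu_pt amDr ptDr.
Qed.

Lemma nu_act q s x : nu x (tact q s) = nu (am s x) q.
Proof.
move: q; apply: tens_ext.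
- exact: (addf_comp (tactDl HR s) (nuD x)).
- exact: nuD.
- by move=> n r; rewrite tact_pt // !nu_pt amA.
Qed.

Definition mu (z : TT) : NM := tlift (fun q x => nu x q) z.

Lemma phim1 q1 q2 x : nu x (q1 + q2) = nu x q1 + nu x q2. Proof. exact: nuD. Qed.
Lemma phim2 q x1 x2 : nu (x1 + x2) q = nu x1 q + nu x2 q. Proof. exact: nuDx. Qed.
Lemma phim3 q s x : nu x (tact q s) = nu (am s x) q. Proof. exact: nu_act. Qed.

Lemma mu_pt q x : mu (pt (@tact R mul N an) am q x) = nu x q.
Proof. exact: (tlift_pt phim1 phim2 phim3). Qed.
Lemma muD : isadd mu.
Proof. move=> a b; exact: (tliftD phim1 phim2 phim3). Qed.

Definition dec (x : M) : seq (R * M) := projT1 (cid (HMt.1 x)).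
Lemma decP x : x = \sum_(p <- dec x) am p.1 p.2.
Proof. exact: (projT2 (cid (HMt.1 x))). Qed.

Definition gam (n : N) (x : M) : TT :=
  \sum_(p <- dec x) pt (@tact R mul N an) am (pt an mul n p.1) p.2.

Section Indep.
Variable n : N.
Let psi := fun (a : R) (y : M) => pt (@tact R mul N an) am (pt an mul n a) y.
Lemma psi1 a1 a2 y : psi (a1 + a2) y = psi a1 y + psi a2 y.
Proof. by rewrite /psi ptDr ptDl. Qed.
Lemma psi2 a y1 y2 : psi a (y1 + y2) = psi a y1 + psi a y2.
Proof. exact: ptDr. Qed.
Lemma psi3 a b y : psi (mul a b) y = psi a (am b y).
Proof. by rewrite /psi -tact_pt // pt_bal. Qed.

Lemma gam_indep (s : seq (R * M)) x :
  \sum_(p <- s) am p.1 p.2 = x -> \sum_(p <- s) psi p.1 p.2 = gam n x.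
Proof.
move=> sx.
set d := dec x.
pose u := s ++ map (fun p => (- p.1, p.2)) d.
have u0 : \sum_(p <- u) am p.1 p.2 = 0.
  rewrite big_cat big_map sx /=.
  under eq_bigr => p _ do rewrite (addfN (amDl p.2)).
  by rewrite sumrN -decP subrr.
have := tsum_eq psi1 psi2 psi3 (HMt.2 _ u0).
rewrite /tsum big_nil big_cat big_map /=.
have -> : \sum_(j <- d) psi (- j.1) j.2 = - \sum_(j <- d) psi j.1 j.2.
  rewrite -sumrN; apply: eq_bigr => p _.
  exact: (@addfN _ _ (fun a => psi a p.2) (fun a b => psi1 a b p.2)).
move=> /eqP; rewrite subr_eq0 => /eqP ->.
by [].
Qed.
End Indep.

Lemma gam1 n1 n2 x : gam (n1 + n2) x = gam n1 x + gam n2 x.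
Proof. by rewrite /gam -big_split; apply: eq_bigr => p _; rewrite ptDl ptDl. Qed.
Lemma gam2 n x1 x2 : gam n (x1 + x2) = gam n x1 + gam n x2.
Proof.
rewrite /gam -big_cat; symmetry; apply: gam_indep.
by rewrite big_cat -!decP.
Qed.
Lemma gam3 n r x : gam (an n r) x = gam n (am r x).
Proof.
rewrite -(@gam_indep n (map (fun p => (mul r p.1, p.2)) (dec x)) (am r x)).
- by rewrite /gam big_map; apply: eq_bigr => p _ /=; rewrite pt_bal.
- rewrite big_map /= {2}(decP x) (addf_sum _ _ (amDr r)).
  by apply: eq_bigr => p _; rewrite amA.
Qed.

Definition beta (z : NM) : TT := tlift gam z.
Lemma beta_pt n x : beta (pt an am n x) = gam n x.
Proof. exact: (tlift_pt gam1 gam2 gam3). Qed.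
Lemma betaD : isadd beta.
Proof. move=> a b; exact: (tliftD gam1 gam2 gam3). Qed.

Lemma mu_beta z : mu (beta z) = z.
Proof.
move: z; apply: tens_ext (addf_comp betaD muD) (fun a b => erefl) _.
move=> n x; rewrite beta_pt /gam (addf_sum _ _ muD).
under eq_bigr => p _ do rewrite mu_pt nu_pt.
have hp : isadd (pt an am n) by move=> a b; exact: ptDr.
by rewrite -(addf_sum _ _ hp) -decP.
Qed.

Lemma beta_mu z : beta (mu z) = z.
Proof.
move: z; apply: tens_ext (addf_comp muD betaD) (fun a b => erefl) _.
move=> q x; rewrite mu_pt.
move: q; apply: tens_ext.
- exact: (addf_comp (nuD x) betaD).
- by move=> a b; rewrite ptDl.
- move=> n r; rewrite nu_pt beta_pt.
  have := @gam_indep n [:: (r, x)] (am r x).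
  by rewrite !big_seq1 => <-.
Qed.

Lemma mu_inj z : mu z = 0 -> z = 0.
Proof. by move=> h; rewrite -(beta_mu z) h (isadd0 betaD). Qed.

End Assoc.

Section TU.
Variables (R : zmodType) (mul : R -> R -> R).
Hypothesis HR : nuring_axioms mul.
Hypothesis HRt : tunital_ring mul.

Lemma mul_lmod : lmod_axioms mul mul.
Proof.
split.
- by move=> r s m; rewrite (rmulA HR).
- by move=> r m1 m2; rewrite (rmulDr HR).
- by move=> r1 r2 m; rewrite (rmulDl HR).
Qed.

Section OneN.
Variables (N : zmodType) (an : N -> R -> N).
Hypothesis HN : rmod_axioms mul an.

Lemma mu_R (q : TN mul an) r : mu (pt (@tact R mul N an) mul q r) = tact q r.
Proof. by rewrite (mu_pt HR mul_lmod). Qed.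

Lemma TN_tunital : tunital_rmod mul (@tact R mul N an).
Proof.
split.
- move=> q; exists (val (beta HRt q)).
  rewrite -{1}(mu_beta HR mul_lmod HRt q) {1}(tval_sum (beta HRt q)).
  rewrite (addf_sum _ _ (muD HR mul_lmod)).
  by apply: eq_bigr => p _; rewrite mu_R.
- move=> s h; apply: tcls_eq0; apply: (mu_inj HR mul_lmod HRt).
  rewrite tcls_sum (addf_sum _ _ (muD HR mul_lmod)); rewrite -[RHS]h.
  by apply: eq_bigr => p _; rewrite mu_R.
Qed.

Hypothesis HNt : tunital_rmod mul an.

Lemma teps_inj0 (q : TN mul an) : teps q = 0 -> q = 0.
Proof.
rewrite -(tcls_val q) teps_cls // => h.
by apply: tcls_eq0'; apply: HNt.2.
Qed.

Lemma teps_inj (q1 q2 : TN mul an) : teps q1 = teps q2 -> q1 = q2.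
Proof.
move=> e; apply/eqP; rewrite -subr_eq0; apply/eqP; apply: teps_inj0.
by rewrite (tepsD HN) (addfN (tepsD HN)) e subrr.
Qed.

Lemma teps_surj (n : N) : exists q : TN mul an, teps q = n.
Proof.
have [s ->] := HNt.1 n; exists (tcls an mul s); exact: teps_cls.
Qed.
End OneN.

Lemma Tmap_ext (N1 N2 M : zmodType) (a1 : N1 -> R -> N1) (a2 : N2 -> R -> N2)
  (am : R -> M -> M) (g1 g2 : N1 -> N2) :
  rmod_morph a1 a2 g1 -> g1 =1 g2 -> forall q : Tens a1 am, Tmap a2 g1 q = Tmap a2 g2 q.
Proof.
move=> h e; have h2 : rmod_morph a1 a2 g2.
  by case: h => h1 h3; split=> *; rewrite -!e.
apply: tens_ext; [exact: TmapD h | exact: TmapD h2|].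
by move=> n m; rewrite !Tmap_pt // e.
Qed.

Lemma Tmap_teps (L N : zmodType) (aL : L -> R -> L) (an : N -> R -> N)
  (phi : L -> TN mul an) :
  rmod_axioms mul aL -> rmod_axioms mul an ->
  rmod_morph aL (@tact R mul N an) phi ->
  forall q : TN mul aL, Tmap an (fun l => teps (phi l)) q = phi (teps q).
Proof.
move=> HL HN hphi.
have hm : rmod_morph aL an (fun l => teps (phi l)).
  split; first exact: (addf_comp (gD hphi) (tepsD HN)).
  by move=> x r; rewrite (gA hphi) teps_act.
apply: tens_ext; [exact: TmapD hm | exact: (addf_comp (tepsD HL) (gD hphi)) |].
by move=> n m; rewrite Tmap_pt // pt_eps // teps_pt // (gA hphi).
Qed.

Section Kernel.
Variables (K N1 N2 : zmodType) (aK : K -> R -> K) (a1 : N1 -> R -> N1) (a2 : N2 -> R -> N2).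
Hypotheses (HK : rmod_axioms mul aK) (H1 : rmod_axioms mul a1) (H2 : rmod_axioms mul a2).
Variables (k : K -> N1) (f : N1 -> N2).
Hypotheses (Hk : rmod_morph aK a1 k) (Hf : rmod_morph a1 a2 f) (kinj : injective k)
  (kf : forall y, f y = 0 <-> exists x, y = k x).

Lemma teps_comp_morph (L N : zmodType) (aL : L -> R -> L) (an : N -> R -> N)
  (phi : L -> TN mul an) :
  rmod_axioms mul an -> rmod_morph aL (@tact R mul N an) phi ->
  rmod_morph aL an (fun l => teps (phi l)).
Proof.
move=> HN hphi; split; first exact: (addf_comp (gD hphi) (tepsD HN)).
by move=> x r; rewrite (gA hphi) teps_act.
Qed.

Lemma Tkernel : is_tkernel_r mul (@tact R mul K aK) (@tact R mul N1 a1)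
   (Tmap a1 k) (Tmap a2 f).
Proof.
split.
  apply: tens_ext; first exact: (addf_comp (TmapD Hk) (TmapD Hf)).
    by move=> *; rewrite addr0.
  move=> n m; rewrite !Tmap_pt //.
  have -> : f (k n) = 0 by apply/kf; exists n.
  exact: pt0l.
move=> L aL g HL HLt Hg Hfg.
have e1 : forall y, exists x, teps (g y) = k x.
  move=> y; apply/kf; rewrite -(teps_Tmap H1 H2 Hf) Hfg; exact: isadd0 (tepsD H2).
case: (choice e1) => g' Hg'.
have hg'm : rmod_morph aL aK g'.
  split => [x y|x r]; apply: kinj.
    by rewrite (gD Hk) -!Hg' (gD Hg) (tepsD H1).
  by rewrite (gA Hk) -!Hg' (gA Hg) teps_act.
case: (choice HLt.1) => dL HdL.
pose del y := tcls aL mul (dL y).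
have edel : forall y, teps (del y) = y by move=> y; rewrite /del teps_cls // -HdL.
have hdel : rmod_morph aL (@tact R mul L aL) del.
  split => [x y|x r]; apply: (teps_inj HL HLt).
    by rewrite (tepsD HL) !edel.
  by rewrite teps_act // !edel.
have hgt := teps_comp_morph H1 Hg.
exists (fun y => Tmap aK g' (del y)); split.
- split => [x y|x r]; first by rewrite (gD hdel) (TmapD hg'm).
  by rewrite (gA hdel) (Tmap_act HR hg'm).
- move=> y; rewrite (Tmap_comp (g3 := fun l => teps (g l)) hg'm Hk hgt) //.
  by rewrite (Tmap_teps HL H1 Hg) edel.
- move=> h' hh' eh' y.
  have e2 : forall l, teps (h' l) = g' l.
    move=> l; apply: kinj; rewrite -(teps_Tmap HK H1 Hk) eh'; exact: Hg'.
  rewrite -{1}(edel y) -(Tmap_teps HL HK hh').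
  exact: (Tmap_ext (teps_comp_morph HK hh') e2).
Qed.
End Kernel.
End TU.

Section Unit.
Variables (R : zmodType) (mul : R -> R -> R).
Hypothesis HR : nuring_axioms mul.

Lemma unitz_add (x y : unitz R) : x + y = (x.1 + y.1, x.2 + y.2).
Proof. by []. Qed.

Section RtR.
Variables (N : zmodType) (an : N -> R -> N).
Hypothesis HN : rmod_axioms mul an.

Lemma anDr_add n : isadd (an n). Proof. by move=> x y; rewrite (anDr HN). Qed.
Lemma anDl_add r : isadd (an^~ r). Proof. by move=> x y; rewrite (anDl HN). Qed.

Lemma rt_ract_rmod : rmod_axioms (rt_mul mul) (rt_ract an).
Proof.
split.
- move=> n [x1 x2] [y1 y2]; rewrite /rt_ract /rt_mul /=.
  rewrite !(anDr HN) !(addf_mulz (anDr_add n)) (anDl HN) (addf_mulz (anDl_add y2)).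
  rewrite (anA HN) mulrzDl mulrzA.
  rewrite -!addrA; congr (_ + _); rewrite [in RHS]addrC -!addrA; congr (_ + _).
  by rewrite addrC.
- by move=> n1 n2 x; rewrite /rt_ract mulrzDl (anDl HN) addrACA.
- by move=> n x y; rewrite /rt_ract unitz_add /= mulrzDr (anDr HN) addrACA.
Qed.

Lemma rt_ract1 n : rt_ract an n (rt_one R) = n.
Proof. by rewrite /rt_ract /rt_one /= mulr1z (isadd0 (anDr_add n)) addr0. Qed.
End RtR.

Lemma rt_morph (N1 N2 : zmodType) (a1 : N1 -> R -> N1) (a2 : N2 -> R -> N2) (g : N1 -> N2) :
  rmod_morph a1 a2 g -> rmod_morph (rt_ract a1) (rt_ract a2) g.
Proof.
move=> hg; split; first exact: (gD hg).
by move=> x r; rewrite /rt_ract (gD hg) (gA hg) (addf_mulz (gD hg)).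
Qed.

Definition res (N : zmodType) (a : N -> unitz R -> N) (n : N) (r : R) : N := a n (0, r).

Section Res.
Variables (N : zmodType) (a : N -> unitz R -> N).
Hypotheses (Ha : rmod_axioms (rt_mul mul) a) (Ha1 : forall n, a n (rt_one R) = n).

Lemma res_rmod : rmod_axioms mul (res a).
Proof.
case: Ha => hA hDl hDr; split.
- move=> n r s; rewrite /res -hA /rt_mul /=.
  by rewrite mulr0 !mulr0z !add0r.
- by move=> n1 n2 r; rewrite /res hDl.
- by move=> n r1 r2; rewrite /res -hDr unitz_add /= addr0.
Qed.

Lemma res_dec n z r : a n (z, r) = n *~ z + res a n r.
Proof.
case: Ha => hA hDl hDr.
have -> : (z, r) = (z, 0) + (0, r) :> unitz R by rewrite unitz_add /= addr0 add0r.
rewrite hDr; congr (_ + _).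
have hadd : isadd (fun z => a n (z, 0)).
  by move=> x y; rewrite -hDr unitz_add /= addr0.
by rewrite (addf_int hadd) Ha1.
Qed.

Lemma res_morph (N2 : zmodType) (a2 : N2 -> unitz R -> N2) (g : N -> N2) :
  rmod_morph a a2 g -> rmod_morph (res a) (res a2) g.
Proof. by case=> h1 h2; split=> // x r; rewrite /res h2. Qed.
End Res.

Section A1.
Variables (N : zmodType) (an : N -> R -> N) (a : N -> unitz R -> N).
Variables (F : zmodType) (aF : R -> F -> F).
Hypotheses (HN : rmod_axioms mul an) (HF : lmod_axioms mul aF).
Hypothesis ha : forall n z r, a n (z, r) = n *~ z + an n r.

Lemma te_unitz s t : tens_eq a (rt_lact aF) s t <-> tens_eq an aF s t.
Proof.
have hl : forall m : F, isadd (fun n : N => pt an aF n m) by move=> m x y; apply: ptDl.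
have hr : forall n : N, isadd (pt an aF n) by move=> n x y; apply: ptDr.
have hl' : forall m : F, isadd (fun n : N => pt a (rt_lact aF) n m) by move=> m x y; apply: ptDl.
split => h.
- apply: tcls_inj; rewrite !tcls_sum.
  have := tsum_eq (phi := pt an aF) (fun n1 n2 m => ptDl _ _ n1 n2 m)
    (fun n m1 m2 => ptDr _ _ n m1 m2) _ h.
  apply.
  move=> n [z r] m; rewrite ha ptDl (addf_mulz (hl m)) /rt_lact /= ptDr.
  by rewrite -(addf_mulz (hr n)) pt_bal.
- apply: tcls_inj; rewrite !tcls_sum.
  have := tsum_eq (phi := pt a (rt_lact aF)) (fun n1 n2 m => ptDl _ _ n1 n2 m)
    (fun n m1 m2 => ptDr _ _ n m1 m2) _ h.
  apply.
  move=> n r m; have -> : an n r = a n (0, r) by rewrite ha mulr0z add0r.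
  by rewrite pt_bal /rt_lact /= mulr0z add0r.
Qed.
End A1.
End Unit.

Section KerS.
Variables (N1 N2 : zmodType) (f : N1 -> N2).

Definition kerP (y : N1) : bool := `[< forall z, f (y + z) = f z >].
Definition KerT := {y : N1 | kerP y}.
HB.instance Definition _ := Choice.on KerT.

Lemma kerP_add a b : kerP a -> kerP b -> kerP (a + b).
Proof.
move=> /asboolP ha /asboolP hb; apply/asboolP => z.
by rewrite -addrA ha hb.
Qed.
Lemma kerP_opp a : kerP a -> kerP (- a).
Proof.
move=> /asboolP ha; apply/asboolP => z.
by rewrite -(ha (- a + z)) addrA subrr add0r.
Qed.
Lemma kerP0 : kerP 0.
Proof. by apply/asboolP => z; rewrite add0r. Qed.

Definition kadd (a b : KerT) : KerT := exist (fun y => kerP y) (val a + val b) (kerP_add (valP a) (valP b)).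
Definition kopp (a : KerT) : KerT := exist (fun y => kerP y) (- val a) (kerP_opp (valP a)).
Definition kzero : KerT := exist (fun y => kerP y) 0 kerP0.

Lemma kaddA : associative kadd.
Proof. by move=> a b c; apply: val_inj; rewrite /= addrA. Qed.
Lemma kaddC : commutative kadd.
Proof. by move=> a b; apply: val_inj; rewrite /= addrC. Qed.
Lemma kadd0 : left_id kzero kadd.
Proof. by move=> a; apply: val_inj; rewrite /= add0r. Qed.
Lemma kaddN : left_inverse kzero kopp kadd.
Proof. by move=> a; apply: val_inj; rewrite /= addNr. Qed.

HB.instance Definition _ := GRing.isZmodule.Build KerT kaddA kaddC kadd0 kaddN.

Lemma kval_add : isadd (val : KerT -> N1). Proof. by []. Qed.

Lemma kerPE : isadd f -> forall y, kerP y <-> f y = 0.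
Proof.
move=> hf y; split.
  by move=> /asboolP h; rewrite -(addr0 y) h (isadd0 hf).
by move=> h; apply/asboolP => z; rewrite hf h add0r.
Qed.
End KerS.

Section KerAct.
Variables (R : zmodType) (mul : R -> R -> R).
Hypothesis HR : nuring_axioms mul.
Variables (N1 N2 : zmodType) (a1 : N1 -> R -> N1) (a2 : N2 -> R -> N2) (f : N1 -> N2).
Hypotheses (H1 : rmod_axioms mul a1) (H2 : rmod_axioms mul a2) (Hf : rmod_morph a1 a2 f).

Definition kact (y : KerT f) (x : unitz R) : KerT f := insubd y (rt_ract a1 (val y) x).

Lemma kact_val y x : val (kact y x) = rt_ract a1 (val y) x.
Proof.
rewrite /kact val_insubd; case: ifP => // /negP [].
apply/(kerPE (gD Hf)).
have hf := gA (rt_morph Hf); rewrite hf.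
have /(kerPE (gD Hf)) -> := valP y.
by rewrite /rt_ract mul0rz (isadd0 (anDl_add H2 _)) addr0.
Qed.

Lemma kact_rmod : rmod_axioms (rt_mul mul) kact.
Proof.
have [hA hDl hDr] := rt_ract_rmod H1.
split.
- by move=> n r s; apply: val_inj; rewrite !kact_val hA.
- by move=> n1 n2 r; apply: val_inj; rewrite /= !kact_val hDl.
- by move=> n r1 r2; apply: val_inj; rewrite /= !kact_val hDr.
Qed.

Lemma kact1 y : kact y (rt_one R) = y.
Proof. by apply: val_inj; rewrite kact_val (rt_ract1 H1). Qed.

Lemma kval_morph : rmod_morph kact (rt_ract a1) val.
Proof. by split=> // y x; rewrite kact_val. Qed.

Lemma kval_morph_res : rmod_morph (res kact) a1 val.
Proof.
split=> // y r; rewrite /res kact_val /rt_ract /= mulr0z add0r //.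
Qed.

Lemma kval_ker y : f y = 0 <-> exists x : KerT f, y = val x.
Proof.
split.
  by move=> /(kerPE (gD Hf)) h; exists (exist (fun y => kerP f y) y h).
by case=> x ->; apply/(kerPE (gD Hf)); apply: valP.
Qed.
End KerAct.

Lemma clause1_gen (R : Type) (K N1 N2 M : zmodType) (a2 : N2 -> R -> N2) (am : R -> M -> M)
  (k : K -> N1) (f : N1 -> N2) :
  (forall x, f (k x) = 0) -> forall t, tens_eq a2 am (tmapl f (tmapl k t)) [::].
Proof.
move=> h t; apply: tcls_eq0; rewrite tcls_sum !big_map big1 // => p _.
by rewrite /= h pt0l.
Qed.

Section Main.
Variables (R : zmodType) (mul : R -> R -> R).
Hypotheses (HR : nuring_axioms mul) (HRt : tunital_ring mul).
Variables (F : zmodType) (aF : R -> F -> F).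
Hypotheses (HF : lmod_axioms mul aF) (HFt : tunital_lmod mul aF).

Lemma mu_nat (N1 N2 : zmodType) (a1 : N1 -> R -> N1) (a2 : N2 -> R -> N2) (g : N1 -> N2) :
  rmod_axioms mul a1 -> rmod_axioms mul a2 -> rmod_morph a1 a2 g ->
  forall w : Tens (@tact R mul N1 a1) aF,
  mu (Tmap (@tact R mul N2 a2) (Tmap a2 g) w) = Tmap a2 g (mu w).
Proof.
move=> H1 H2 Hg.
have HTg := Tmap_morph HR Hg.
apply: tens_ext.
- exact: (addf_comp (TmapD HTg) (muD HR HF)).
- exact: (addf_comp (muD HR HF) (TmapD Hg)).
move=> q x; rewrite (Tmap_pt _ HTg) !(mu_pt HR HF).
move: q; apply: tens_ext.
- exact: (addf_comp (TmapD Hg) (nuD HF x)).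
- exact: (addf_comp (nuD HF x) (TmapD Hg)).
by move=> n r; rewrite (Tmap_pt _ Hg) !(nu_pt _ HF) (Tmap_pt _ Hg).
Qed.

Lemma Tmap_teps_mu (N : zmodType) (an : N -> R -> N) :
  rmod_axioms mul an ->
  forall w : Tens (@tact R mul N an) aF, Tmap an (@teps R mul N an) w = mu w.
Proof.
move=> HN; have he := teps_morph HR HN.
apply: tens_ext; [exact: TmapD he | move=> a b; exact: (@muD R mul HR N an F aF HF a b) |].
move=> q x; rewrite (Tmap_pt _ he) (mu_pt HR HF).
move: q; apply: tens_ext.
- exact: (addf_comp (tepsD HN) (fun a b => ptDl _ _ a b x)).
- exact: nuD HF x.
by move=> n r; rewrite teps_pt // (nu_pt _ HF) pt_bal.
Qed.

Lemma left_to_flat : tflat_l mul aF -> flat_l (rt_mul mul) (rt_one R) (rt_lact aF).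
Proof.
move=> Htf K N1 N2 aK a1 a2 k f HK H1 H2 uK u1 u2 Hk Hf kinj kf.
pose bK := res aK; pose b1 := res a1; pose b2 := res a2.
have HbK := res_rmod HK; have Hb1 := res_rmod H1; have Hb2 := res_rmod H2.
have dK := res_dec HK uK; have d1 := res_dec H1 u1; have d2 := res_dec H2 u2.
have Hk' : rmod_morph bK b1 k := res_morph Hk.
have Hf' : rmod_morph b1 b2 f := res_morph Hf.
have [C1 C2 C3] := Htf _ _ _ _ _ _ _ _ (tact_rmod HR bK) (tact_rmod HR b1) (tact_rmod HR b2)
  (TN_tunital HR HRt bK) (TN_tunital HR HRt b1) (TN_tunital HR HRt b2)
  (Tmap_morph HR Hk') (Tmap_morph HR Hf') (Tkernel HR HbK Hb1 Hb2 Hk' Hf' kinj kf).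
have fk0 : forall x, f (k x) = 0 by move=> x; apply/kf; exists x.
split.
- by move=> t; apply/(te_unitz aF d2); apply: clause1_gen.
- move=> t /(te_unitz aF d1) h; apply/(te_unitz aF dK).
  pose w := beta HFt (tcls bK aF t).
  have e1 : mu (Tmap (@tact R mul N1 b1) (Tmap b1 k) w) = 0.
    rewrite (mu_nat HbK Hb1 Hk') (mu_beta HR HF HFt) (Tmap_cls _ Hk').
    exact: tcls_eq0'.
  have /mu_inj e2 := e1.
  move: (e2 HR HF HFt); rewrite -(tcls_val w) (Tmap_cls _ (Tmap_morph HR Hk')).
  move=> /tcls_eq0 /C2 /tcls_eq0' w0.
  apply: tcls_eq0; rewrite -(mu_beta HR HF HFt (tcls bK aF t)) -/w -(tcls_val w) w0.
  exact: isadd0 (muD HR HF).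
- move=> s /(te_unitz aF d2) h.
  pose w := beta HFt (tcls b1 aF s).
  have e1 : mu (Tmap (@tact R mul N2 b2) (Tmap b2 f) w) = 0.
    rewrite (mu_nat Hb1 Hb2 Hf') (mu_beta HR HF HFt) (Tmap_cls _ Hf').
    exact: tcls_eq0'.
  have := mu_inj HR HF HFt e1.
  rewrite -(tcls_val w) (Tmap_cls _ (Tmap_morph HR Hf')).
  move=> /tcls_eq0 /C3 [t' ht'].
  exists (val (mu (tcls (@tact R mul K bK) aF t'))).
  apply/(te_unitz aF d1); apply: tcls_inj.
  rewrite -(Tmap_cls _ Hk') tcls_val -(mu_nat HbK Hb1 Hk') (Tmap_cls _ (Tmap_morph HR Hk')).
  rewrite (tcls_eq ht') tcls_val /w (mu_beta HR HF HFt) //.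
Qed.


Lemma flat_to_left : flat_l (rt_mul mul) (rt_one R) (rt_lact aF) -> tflat_l mul aF.
Proof.
move=> Hfl K N1 N2 aK a1 a2 k f HK H1 H2 uK u1 u2 Hk Hf Hker.
have fk0 := Hker.1.
pose ka := @kact R N1 N2 a1 f.
have Hka : rmod_axioms (rt_mul mul) ka := kact_rmod H1 H2 Hf.
have ka1 : forall y, ka y (rt_one R) = y by move=> y; apply: (kact1 H1 H2 Hf).
have [D1 D2 D3] := Hfl (KerT f) N1 N2 ka (rt_ract a1) (rt_ract a2) val f Hka
  (rt_ract_rmod H1) (rt_ract_rmod H2) ka1 (rt_ract1 H1) (rt_ract1 H2)
  (kval_morph H2 Hf) (rt_morph Hf) val_inj (kval_ker Hf).
pose bK := res ka.
have HbK : rmod_axioms mul bK := res_rmod Hka.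
have dK := res_dec Hka ka1.
have d1 : forall n z r, rt_ract a1 n (z, r) = n *~ z + a1 n r by [].
have d2 : forall n z r, rt_ract a2 n (z, r) = n *~ z + a2 n r by [].
have hval : rmod_morph bK a1 val := kval_morph_res H2 Hf.
pose j (x : K) : KerT f := insubd (0 : KerT f) (k x).
have vj : forall x, val (j x) = k x.
  move=> x; rewrite /j val_insubd; case: ifP => // /negP [].
  by apply/(kerPE (gD Hf)).
have Hj : rmod_morph aK bK j.
  split => [x y|x r]; apply: val_inj.
    by rewrite /= !vj (gD Hk).
  by rewrite (gA hval) !vj (gA Hk).
pose g0 (q : TN mul bK) := val (teps q).
have Hg0 : rmod_morph (@tact R mul _ bK) a1 g0.
  split => [x y|x r]; rewrite /g0.
    by rewrite (tepsD HbK).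
  by rewrite teps_act // (gA hval).
have Hfg0 : forall q, f (g0 q) = 0 by move=> q; apply/(kval_ker Hf); eexists.
have [h [Hh Hkh _]] := Hker.2 (TN mul bK) _ g0 (tact_rmod HR bK) (TN_tunital HR HRt bK) Hg0 Hfg0.
pose gK (q : TN mul aK) := k (teps q).
have HgK : rmod_morph (@tact R mul _ aK) a1 gK.
  split => [x y|x r]; rewrite /gK.
    by rewrite (tepsD HK) (gD Hk).
  by rewrite teps_act // (gA Hk).
have HfgK : forall q, f (gK q) = 0 by move=> q; apply: fk0.
have [h0 [_ _ Hu]] := Hker.2 (TN mul aK) _ gK (tact_rmod HR aK) (TN_tunital HR HRt aK) HgK HfgK.
have Hhj : rmod_morph (@tact R mul _ aK) aK (fun q => h (Tmap bK j q)).
  have := Tmap_morph HR Hj; case=> t1 t2; case: Hh => t3 t4.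
  by split => *; rewrite ?t1 ?t2 ?t3 ?t4.
have e_hj : forall q : TN mul aK, h (Tmap bK j q) = teps q.
  move=> q; rewrite (Hu _ Hhj _ q) ?(Hu _ (teps_morph HR HK) _ q) //.
  move=> x; rewrite Hkh /g0 (teps_Tmap HK HbK Hj) vj //.
have e_jh : forall q : TN mul bK, j (h q) = teps q.
  by move=> q; apply: val_inj; rewrite vj Hkh.
have Hjh : rmod_morph (@tact R mul _ bK) bK (fun q => j (h q)).
  case: Hh => t3 t4; case: Hj => t1 t2.
  by split => *; rewrite ?t1 ?t2 ?t3 ?t4.
have surj : forall u : Tens bK aF, exists z : Tens aK aF, Tmap bK j z = u.
  move=> u; exists (Tmap aK h (beta HFt u)).
  rewrite (Tmap_comp Hh Hj (teps_morph HR HbK) e_jh) (Tmap_teps_mu HbK).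
  exact: (@mu_beta R mul HR (KerT f) bK F aF HF HFt u).
have inj : forall z : Tens aK aF, Tmap bK j z = 0 -> z = 0.
  move=> z hz.
  have e3 : Tmap (@tact R mul _ bK) (Tmap bK j) (beta HFt z) = 0.
    rewrite -(beta_mu HR HF HFt (Tmap _ _ _)) (mu_nat HK HbK Hj) (mu_beta HR HF HFt) hz.
    exact: isadd0 (betaD HR HF HFt).
  rewrite -(mu_beta HR HF HFt z) -(Tmap_teps_mu HK).
  rewrite -(Tmap_comp (Tmap_morph HR Hj) Hh (teps_morph HR HK) e_hj) e3.
  exact: isadd0 (TmapD Hh).
split.
- by move=> t; apply: clause1_gen.
- move=> t ht.
  have e : tmapl k t = tmapl val (tmapl j t).
    by rewrite /tmapl -map_comp; apply: eq_map => p /=; rewrite vj.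
  move: ht; rewrite e => /(te_unitz aF d1) /D2 /(te_unitz aF dK) /tcls_eq0'.
  rewrite -(Tmap_cls _ Hj) => /inj /tcls_eq0 //.
- move=> s /(te_unitz aF d2) /D3 [u /(te_unitz aF d1) hu].
  have [z hz] := surj (tcls bK aF u).
  exists (val z); apply: tcls_inj.
  rewrite -(Tmap_cls _ Hk) tcls_val -(Tmap_comp Hj hval Hk vj) hz (Tmap_cls _ hval).
  exact: tcls_eq hu.
Qed.

End Main.

Definition opm (S : Type) (smul : S -> S -> S) := fun x y => smul y x.
Definition flipL (S : Type) (M : Type) (a : S -> M -> M) := fun (m : M) (r : S) => a r m.
Definition flipR (S : Type) (N : Type) (a : N -> S -> N) := fun (r : S) (n : N) => a n r.
Definition swp (A B : Type) (p : A * B) := (p.2, p.1).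

Lemma swpK (A B : Type) (s : seq (A * B)) : map (@swp _ _) (map (@swp _ _) s) = s.
Proof. by elim: s => [|[a b] s IH] //=; rewrite IH. Qed.
Lemma swp_tmapr (A B C : Type) (g : B -> C) (s : seq (A * B)) :
  map (@swp _ _) (tmapr g s) = tmapl g (map (@swp _ _) s).
Proof. by rewrite /tmapr /tmapl -!map_comp. Qed.
Lemma swp_tmapl (A B C : Type) (g : A -> C) (s : seq (A * B)) :
  map (@swp _ _) (tmapl g s) = tmapr g (map (@swp _ _) s).
Proof. by rewrite /tmapr /tmapl -!map_comp. Qed.

Lemma te_swp (S : Type) (N M : zmodType) (an : N -> S -> N) (am : S -> M -> M) s t :
  tens_eq an am s t -> tens_eq (flipL am) (flipR an) (map (@swp _ _) s) (map (@swp _ _) t).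
Proof.
elim => {s t}.
- by move=> s; apply: te_refl.
- by move=> s t _; apply: te_sym.
- by move=> s t u _ h1 _ h2; apply: te_trans h1 h2.
- by move=> s1 s2 t1 t2 _ h1 _ h2; rewrite !map_cat; apply: te_cat.
- by move=> s t; rewrite !map_cat; apply: te_comm.
- by move=> m; apply: tcls_eq0; apply: pt0r.
- by move=> n1 n2 m; apply: te_addr.
- by move=> n m1 m2; apply: te_addl.
- by move=> n r m; apply: te_sym; apply: te_bal.
Qed.

Lemma te_swpE (S : Type) (N M : zmodType) (an : N -> S -> N) (am : S -> M -> M) s t :
  tens_eq an am s t <-> tens_eq (flipL am) (flipR an) (map (@swp _ _) s) (map (@swp _ _) t).
Proof.
split; first exact: te_swp.
by move=> /te_swp; rewrite !swpK.
Qed.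

Section Mirror.
Variables (S : zmodType) (smul : S -> S -> S).

Lemma lmod_rmodE (M : zmodType) (a : S -> M -> M) :
  lmod_axioms smul a -> rmod_axioms (opm smul) (flipL a).
Proof. by case=> h1 h2 h3; split => *; rewrite /flipL /opm ?h1 ?h2 ?h3. Qed.

Lemma rmod_lmodE (N : zmodType) (a : N -> S -> N) :
  rmod_axioms smul a -> lmod_axioms (opm smul) (flipR a).
Proof. by case=> h1 h2 h3; split => *; rewrite /flipR /opm ?h1 ?h2 ?h3. Qed.

Lemma tunL (M : zmodType) (a : S -> M -> M) :
  tunital_lmod smul a -> tunital_rmod (opm smul) (flipL a).
Proof.
case=> h1 h2; split.
- move=> m; have [s ->] := h1 m; exists (map (@swp _ _) s).
  by rewrite big_map.
- move=> s hs; rewrite -[s]swpK.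
  apply: (te_swp (s := map (@swp _ _) s) (t := [::])); apply: h2.
  by rewrite big_map.
Qed.

Lemma tunR (N : zmodType) (a : N -> S -> N) :
  tunital_rmod smul a -> tunital_lmod (opm smul) (flipR a).
Proof.
case=> h1 h2; split.
- move=> m; have [s ->] := h1 m; exists (map (@swp _ _) s).
  by rewrite big_map.
- move=> s hs; rewrite -[s]swpK.
  apply: (te_swp (s := map (@swp _ _) s) (t := [::])); apply: h2.
  by rewrite big_map.
Qed.

Lemma morphRL (N1 N2 : zmodType) (a1 : N1 -> S -> N1) (a2 : N2 -> S -> N2) g :
  rmod_morph a1 a2 g -> lmod_morph (flipR a1) (flipR a2) g.
Proof. by case=> h1 h2; split => // x y; apply: h2. Qed.
Lemma morphLR (N1 N2 : zmodType) (a1 : S -> N1 -> N1) (a2 : S -> N2 -> N2) g :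
  lmod_morph a1 a2 g -> rmod_morph (flipL a1) (flipL a2) g.
Proof. by case=> h1 h2; split => // x y; apply: h2. Qed.

End Mirror.

Section Mirror2.
Variables (S : zmodType) (smul : S -> S -> S).
Lemma kerRL (K N1 N2 : zmodType) (aK : K -> S -> K) (a1 : N1 -> S -> N1) k (f : N1 -> N2) :
  is_tkernel_r smul aK a1 k f -> is_tkernel_l (opm smul) (flipR aK) (flipR a1) k f.
Proof.
case=> h0 hu; split => // L aL g HL HLt Hg Hfg.
have [h [hh hk hun]] := hu L (flipL aL) g (@lmod_rmodE S (opm smul) L aL HL) (@tunL S (opm smul) L aL HLt) (morphLR Hg) Hfg.
exists h; split => // [|h' hh' hk'].
- exact: (morphRL hh).
- exact: hun h' (morphLR hh') hk'.
Qed.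

Lemma kerLR (K N1 N2 : zmodType) (aK : S -> K -> K) (a1 : S -> N1 -> N1) k (f : N1 -> N2) :
  is_tkernel_l smul aK a1 k f -> is_tkernel_r (opm smul) (flipL aK) (flipL a1) k f.
Proof.
case=> h0 hu; split => // L aL g HL HLt Hg Hfg.
have [h [hh hk hun]] := hu L (flipR aL) g (@rmod_lmodE S (opm smul) L aL HL) (@tunR S (opm smul) L aL HLt) (morphRL Hg) Hfg.
exists h; split => // [|h' hh' hk'].
- exact: (morphLR hh).
- exact: hun h' (morphRL hh') hk'.
Qed.
End Mirror2.

Section Flip.
Variables (S : zmodType) (smul : S -> S -> S).

Lemma TR (F : zmodType) (aF : F -> S -> F) :
  tflat_r smul aF -> tflat_l (opm smul) (flipR aF).
Proof.
move=> Htr K N1 N2 aK a1 a2 k f HK H1 H2 uK u1 u2 Hk Hf Hker.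
have [C1 C2 C3] := Htr K N1 N2 (flipR aK) (flipR a1) (flipR a2) k f
   (@rmod_lmodE S (opm smul) _ _ HK) (@rmod_lmodE S (opm smul) _ _ H1)
   (@rmod_lmodE S (opm smul) _ _ H2)
   (@tunR S (opm smul) _ _ uK) (@tunR S (opm smul) _ _ u1) (@tunR S (opm smul) _ _ u2)
   (morphRL Hk) (morphRL Hf) (@kerRL S (opm smul) _ _ _ _ _ _ _ Hker).
split.
- move=> t; apply/te_swpE; rewrite !swp_tmapl /=; exact: C1.
- move=> t /te_swpE; rewrite !swp_tmapl /= => /C2 h; apply/te_swpE; exact: h.
- move=> s /te_swpE; rewrite swp_tmapl => /C3 [t ht]; exists (map (@swp _ _) t).
  apply/te_swpE; rewrite swp_tmapl swpK; exact: ht.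
Qed.

Lemma TL (F : zmodType) (aF : S -> F -> F) :
  tflat_l smul aF -> tflat_r (opm smul) (flipL aF).
Proof.
move=> Htl K N1 N2 aK a1 a2 k f HK H1 H2 uK u1 u2 Hk Hf Hker.
have [C1 C2 C3] := Htl K N1 N2 (flipL aK) (flipL a1) (flipL a2) k f
   (@lmod_rmodE S (opm smul) _ _ HK) (@lmod_rmodE S (opm smul) _ _ H1)
   (@lmod_rmodE S (opm smul) _ _ H2)
   (@tunL S (opm smul) _ _ uK) (@tunL S (opm smul) _ _ u1) (@tunL S (opm smul) _ _ u2)
   (morphLR Hk) (morphLR Hf) (@kerLR S (opm smul) _ _ _ _ _ _ _ Hker).
split.
- move=> t; apply/te_swpE; rewrite !swp_tmapr /=; exact: C1.
- move=> t /te_swpE; rewrite !swp_tmapr /= => /C2 h; apply/te_swpE; exact: h.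
- move=> s /te_swpE; rewrite swp_tmapr => /C3 [t ht]; exists (map (@swp _ _) t).
  apply/te_swpE; rewrite swp_tmapr swpK; exact: ht.
Qed.

Lemma FR (one : S) (F : zmodType) (aF : F -> S -> F) :
  flat_r smul one aF -> flat_l (opm smul) one (flipR aF).
Proof.
move=> Htr K N1 N2 aK a1 a2 k f HK H1 H2 uK u1 u2 Hk Hf kinj Hker.
have [C1 C2 C3] := Htr K N1 N2 (flipR aK) (flipR a1) (flipR a2) k f
   (@rmod_lmodE S (opm smul) _ _ HK) (@rmod_lmodE S (opm smul) _ _ H1)
   (@rmod_lmodE S (opm smul) _ _ H2) uK u1 u2
   (morphRL Hk) (morphRL Hf) kinj Hker.
split.
- move=> t; apply/te_swpE; rewrite !swp_tmapl /=; exact: C1.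
- move=> t /te_swpE; rewrite !swp_tmapl /= => /C2 h; apply/te_swpE; exact: h.
- move=> s /te_swpE; rewrite swp_tmapl => /C3 [t ht]; exists (map (@swp _ _) t).
  apply/te_swpE; rewrite swp_tmapl swpK; exact: ht.
Qed.

Lemma FL (one : S) (F : zmodType) (aF : S -> F -> F) :
  flat_l smul one aF -> flat_r (opm smul) one (flipL aF).
Proof.
move=> Htl K N1 N2 aK a1 a2 k f HK H1 H2 uK u1 u2 Hk Hf kinj Hker.
have [C1 C2 C3] := Htl K N1 N2 (flipL aK) (flipL a1) (flipL a2) k f
   (@lmod_rmodE S (opm smul) _ _ HK) (@lmod_rmodE S (opm smul) _ _ H1)
   (@lmod_rmodE S (opm smul) _ _ H2) uK u1 u2
   (morphLR Hk) (morphLR Hf) kinj Hker.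
split.
- move=> t; apply/te_swpE; rewrite !swp_tmapr /=; exact: C1.
- move=> t /te_swpE; rewrite !swp_tmapr /= => /C2 h; apply/te_swpE; exact: h.
- move=> s /te_swpE; rewrite swp_tmapr => /C3 [t ht]; exists (map (@swp _ _) t).
  apply/te_swpE; rewrite swp_tmapr swpK; exact: ht.
Qed.
End Flip.

Lemma rt_mul_op (R : zmodType) (mul : R -> R -> R) :
  rt_mul (opm mul) = opm (rt_mul mul).
Proof.
apply/funext => x; apply/funext => y.
rewrite /rt_mul /opm; congr (_, _); first by rewrite mulrC.
by rewrite [_ + y.2 *~ _]addrC.
Qed.

Lemma nuring_op (R : zmodType) (mul : R -> R -> R) :
  nuring_axioms mul -> nuring_axioms (opm mul).
Proof.
case=> hA [hl hr]; split; first by move=> x y z; rewrite /opm hA.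
by split => x y z; rewrite /opm ?hl ?hr.
Qed.

Theorem corollary8p20 (R : zmodType) (mul : R -> R -> R) :
  nuring_axioms mul -> tunital_ring mul ->
  (forall (F : zmodType) (aF : R -> F -> F),
     lmod_axioms mul aF -> tunital_lmod mul aF ->
     (tflat_l mul aF <-> flat_l (rt_mul mul) (rt_one R) (rt_lact aF))) /\
  (forall (F : zmodType) (aF : F -> R -> F),
     rmod_axioms mul aF -> tunital_rmod mul aF ->
     (tflat_r mul aF <-> flat_r (rt_mul mul) (rt_one R) (rt_ract aF))).
Proof.
move=> HR HRt; split.
  move=> F aF HF HFt; split.
    exact: left_to_flat.
  exact: flat_to_left.
move=> F aF HF HFt.
have HR' := nuring_op HR.
have HRt' : tunital_ring (opm mul) := @tunL R mul R mul HRt.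
have HF' : lmod_axioms (opm mul) (flipR aF) := rmod_lmodE HF.
have HFt' : tunital_lmod (opm mul) (flipR aF) := tunR HFt.
have E := rt_mul_op mul.
split.
- move=> Htr.
  have h1 : flat_l (rt_mul (opm mul)) (rt_one R) (rt_lact (flipR aF)).
    exact: (left_to_flat HR' HRt' HF' HFt' (TR Htr)).
  move: h1; rewrite E => h1.
  exact: (@FL _ (opm (rt_mul mul)) (rt_one R) F (flipR (rt_ract aF)) h1).
- move=> Hfr.
  have h1 := @FR _ (rt_mul mul) (rt_one R) F (rt_ract aF) Hfr.
  have h2 : flat_l (rt_mul (opm mul)) (rt_one R) (rt_lact (flipR aF)) by rewrite E.
  exact: (@TL _ (opm mul) F (flipR aF) (flat_to_left HR' HRt' HF' HFt' h2)).
Qed.
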